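(* Let $f'$ and $f''$ be endofunctions of $[n']$ and $[n'']$ respectively. Then in $\mathbf{EFSym}$ $$R_{f'}R_{f''}=\sum_f R_f,$$ where the sum is over all endofunctions $f$ of $[n'+n'']$ such that $\mathrm{std}(f^{[n']})=f'$ and $\mathrm{std}(f^{[n'+n'']\setminus[n']})=f''$.
   Context: $\mathbf{EFSym}$: over $A=\{a_{ij}:i\ne j,\ i,j\ge1\}$ with $a_{ij}\prec a_{kl}$ iff $j=k$, for $f:[n]\to[n]$, $\mathbf S^f$ is the sum of words $w_1\cdots w_n$ over $A$ with $w_{f(j)}\prec w_j$ whenever $f(j)\ne j$; the $\mathbf S^f$ form a basis of $\mathbf{EFSym}$ with $\mathbf S^f\mathbf S^g=\mathbf S^{f\bullet g}$ (shifted concatenation: $i\mapsto f(i)$ for $i\le n$, $n+i\mapsto g(i)+n$). For $I\subseteq[n]$, $f^I:I\to I$ is $f^I(x)=f(x)$ if $f(x)\in I$ and $f^I(x)=x$ otherwise; $\mathrm{std}(f^I)=\tau_I\circ f^I\circ\tau_I^{-1}$ with $\tau_I:I\to[|I|]$ increasing. Partial order on endofunctions of $[n]$: the cover relation is $f<g$ iff there is $j$ with $f(j)\ne j$, $g(j)=j$ and $g(k)=f(k)$ for all $k\ne j$ (so $f\le g$ iff $g$ is obtained from $f$ by turning some non-fixed points into fixed points). $\mathrm{Fix}(f)$ is the number of fixed points of $f$, and $R_f=\sum_{g\le f}(-1)^{\mathrm{Fix}(f)-\mathrm{Fix}(g)}\mathbf S^g$. *)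

(* Defs.v *)
From HB Require Import structures.
From mathcomp Require Import all_boot all_order all_algebra.
Set Implicit Arguments. Unset Strict Implicit. Unset Printing Implicit Defensive.
Import GRing.Theory.
Local Open Scope ring_scope.

(* Endofunctions of [n] are {ffun 'I_n -> 'I_n} (0-indexed: [n] = {0,...,n-1}). *)
Notation endo n := {ffun 'I_n -> 'I_n}.

(* Letters a_ij are pairs (i,j) with i <> j, i,j >= 1. *)
Definition letter := (nat * nat)%type.
Definition valid_letter (a : letter) : bool := [&& a.1 != a.2, (0 < a.1)%N & (0 < a.2)%N].
Definition prec (a b : letter) : bool := a.2 == b.1.

(* Formal series in noncommuting letters: coefficient function on words. *)
Definition series := seq letter -> int.

Definition ser_mul (F G : series) : series :=
  fun w => \sum_(i < (size w).+1) F (take i w) * G (drop i w).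

Definition Sf n (f : endo n) : series :=
  fun w => ([&& size w == n, all valid_letter w &
             [forall j : 'I_n, (f j != j) ==> prec (nth (0%N,0%N) w (f j)) (nth (0%N,0%N) w j)]] : nat)%:Z.

Definition Fix n (f : endo n) : nat := #|[set x | f x == x]|.

Definition efle n (f g : endo n) : bool := [forall k, (g k == f k) || (g k == k)].

Definition Rf n (f : endo n) : series :=
  fun w => \sum_(g : endo n | efle g f) (-1) ^+ (Fix f - Fix g) * Sf g w.

(* std(f^I) : the restriction f^I, standardized via the increasing bijection
   tau_I : I -> [#|I|] (enum I lists I in increasing order). *)
Definition stdres n (f : endo n) (I : {set 'I_n}) : endo #|I| :=
  [ffun k : 'I_#|I| =>
     let x := enum_val k in
     if f x \in I then insubd k (index (f x) (enum I)) else k].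

(* Graph of an endofunction as a nat sequence (used to compare endofunctions
   of [m] and [m'] with m = m' only propositionally). *)
Definition ef_code m (g : endo m) : seq nat := [seq val (g k) | k <- enum 'I_m].

Definition lowset n1 n2 : {set 'I_(n1 + n2)} := [set i : 'I_(n1 + n2) | (i < n1)%N].
Definition highset n1 n2 : {set 'I_(n1 + n2)} := [set i : 'I_(n1 + n2) | (n1 <= i)%N].

(* Main.v *)
Require Import Defs.
From HB Require Import structures.
From mathcomp Require Import all_boot all_order all_algebra.
Set Implicit Arguments. Unset Strict Implicit. Unset Printing Implicit Defensive.
Import GRing.Theory.
Local Open Scope ring_scope.

Definition dl : letter := (0%N, 0%N).
Definition VV n (w : seq letter) : bool := (size w == n) && all valid_letter w.
Definition cc n (w : seq letter) (j y : 'I_n) : int :=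
  (((y == j) || prec (nth dl w y) (nth dl w j)) : nat)%:Z.
Definition AA n (w : seq letter) (j y : 'I_n) : int :=
  \sum_(z : 'I_n | (y == z) || (y == j)) (-1) ^+ ((y == j) && (z != j)) * cc w j z.

Lemma prod_bool (T : finType) (b : T -> bool) :
  \prod_(j : T) ((b j : nat)%:Z) = ([forall j, b j] : nat)%:Z.
Proof.
case: (boolP [forall j, b j]) => [/forallP H | /forallPn [j Hj]].
  by rewrite big1 // => j _; rewrite H.
by rewrite (bigD1 j) //= (negbTE Hj) mul0r.
Qed.

Lemma Sf_prod n (g : endo n) w :
  Sf g w = (VV n w : nat)%:Z * \prod_j cc w j (g j).
Proof.
rewrite /Sf /VV /cc prod_bool.
have -> : [forall j, (g j != j) ==> prec (nth dl w (g j)) (nth dl w j)] =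
          [forall j, (g j == j) || prec (nth dl w (g j)) (nth dl w j)].
  by apply: eq_forallb => j; rewrite implybE negbK.
by case: (size w == n); case: (all _ _); case: [forall j, _].
Qed.

Lemma sign_prod n (f g : endo n) : efle g f ->
  \prod_j ((-1 : int) ^+ ((f j == j) && (g j != j))) = (-1) ^+ (Fix f - Fix g).
Proof.
move=> /forallP H; rewrite prodrXr; congr (_ ^+ _).
transitivity #|[pred j | (f j == j) && (g j != j)]|.
  rewrite -sum1_card [RHS]big_mkcond /=; apply: eq_bigr => j _.
  by rewrite inE; case: ((f j == j) && (g j != j)).
have -> : #|[pred j | (f j == j) && (g j != j)]| =
          #|[set x | f x == x] :\: [set x | g x == x]|.
  by apply: eq_card => j; rewrite !inE andbC.
rewrite cardsDS //.
apply/subsetP => x; rewrite !inE => /eqP gx.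
by have := H x; rewrite gx => /orP [/eqP -> | ].
Qed.

Lemma Rf_prod n (f : endo n) w :
  Rf f w = (VV n w : nat)%:Z * \prod_j AA w j (f j).
Proof.
rewrite /Rf /AA.
transitivity ((VV n w : nat)%:Z * \sum_(g : endo n | efle g f)
   \prod_j ((-1) ^+ ((f j == j) && (g j != j)) * cc w j (g j))).
  rewrite mulr_sumr; apply: eq_bigr => g Hg.
  by rewrite Sf_prod big_split /= sign_prod // mulrCA.
congr (_ * _).
rewrite bigA_distr_big_dep; apply: eq_bigl => g.
apply/forallP/familyP => H x; have := H x; by rewrite ?inE.
Qed.

Lemma enum_val_iota N (I : {set 'I_N}) a (hI : map val (enum I) = iota a #|I|)
  (k : 'I_#|I|) : val (enum_val k) = (a + k)%N.
Proof.
rewrite (enum_val_nth (enum_val k)) -(nth_map (enum_val k) 0%N); last first.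
  by rewrite -cardE.
by rewrite hI nth_iota.
Qed.

Lemma sub_lt (a x m : nat) : (a <= x)%N -> (x < a + m)%N -> (x - a < m)%N.
Proof. by move=> H1 H2; rewrite -(ltn_add2l a) subnKC. Qed.

Lemma stdres_val N (f : endo N) (I : {set 'I_N}) a
  (hI : map val (enum I) = iota a #|I|) (k : 'I_#|I|) :
  val (stdres f I k) = if (a <= f (enum_val k) < a + #|I|)%N
                       then (f (enum_val k) - a)%N else val k.
Proof.
rewrite /stdres ffunE /=.
move: (f (enum_val k)) => x.
have mem : (x \in I) = (a <= x < a + #|I|)%N.
  by rewrite -mem_enum -(mem_map val_inj) hI mem_iota.
rewrite mem; case: ifP => // Hin.
have Hidx : index x (enum I) = (x - a)%N.
  rewrite -(index_map val_inj) hI.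
  case/andP: Hin => H1 H2.
  have Hlt : (x - a < #|I|)%N by apply: sub_lt.
  have -> : val x = nth 0%N (iota a #|I|) (x - a).
    by rewrite nth_iota // subnKC.
  by rewrite index_uniq ?iota_uniq ?size_iota.
rewrite Hidx insubdK //.
by case/andP: Hin => H1 H2; apply: sub_lt.
Qed.

Lemma enum_filter N (A : {set 'I_N}) : enum A = filter (mem A) (enum 'I_N).
Proof. by rewrite -deprecated_filter_index_enum enumT unlock. Qed.

Lemma val_enum_filter N (A : {set 'I_N}) (p : pred nat) :
  (forall i : 'I_N, (i \in A) = p i) ->
  map val (enum A) = filter p (iota 0 N).
Proof.
move=> H; rewrite enum_filter -val_enum_ord filter_map.
congr map; apply: eq_filter => i /=; exact: H.
Qed.

Lemma low_enum n1 n2 : map val (enum (lowset n1 n2)) = iota 0 n1.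
Proof.
rewrite (@val_enum_filter _ _ (fun i => i < n1)%N); last by move=> i; rewrite inE.
rewrite iotaD filter_cat add0n.
rewrite (eq_in_filter (a2 := predT)); last by move=> i; rewrite mem_iota.
rewrite filter_predT (eq_in_filter (a2 := pred0)); last first.
  move=> i; rewrite mem_iota /= => /andP [H _]; by rewrite ltnNge H.
by rewrite filter_pred0 cats0.
Qed.

Lemma high_enum n1 n2 : map val (enum (highset n1 n2)) = iota n1 n2.
Proof.
rewrite (@val_enum_filter _ _ (fun i => n1 <= i)%N); last by move=> i; rewrite inE.
rewrite iotaD filter_cat add0n.
rewrite (eq_in_filter (a2 := pred0)); last first.
  move=> i; rewrite mem_iota /= add0n => H; by rewrite leqNgt H.
rewrite filter_pred0 (eq_in_filter (a2 := predT)); last first.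
  move=> i; rewrite mem_iota /= => /andP [H _]; by [].
by rewrite filter_predT.
Qed.

Lemma card_low n1 n2 : #|lowset n1 n2| = n1.
Proof. by rewrite cardE -(size_map val) low_enum size_iota. Qed.

Lemma card_high n1 n2 : #|highset n1 n2| = n2.
Proof. by rewrite cardE -(size_map val) high_enum size_iota. Qed.

Lemma stdres_val' N (f : endo N) (I : {set 'I_N}) a m (hm : #|I| = m)
  (hI : map val (enum I) = iota a m) (k : 'I_#|I|) (x : 'I_N) :
  val x = (a + k)%N ->
  val (stdres f I k) = if (a <= f x < a + m)%N then (f x - a)%N else val k.
Proof.
move=> hx.
have hI' : map val (enum I) = iota a #|I| by rewrite hm.
rewrite (stdres_val f hI').
have -> : enum_val k = x by apply: val_inj; rewrite (enum_val_iota hI').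
by have -> : (a + #|I| = a + m)%N by rewrite hm.
Qed.

Lemma ef_code_eq m m' (g : endo m) (h : endo m') (e : m = m') :
  (ef_code g == ef_code h) = [forall k : 'I_m, val (g k) == val (h (cast_ord e k))].
Proof.
subst m'; apply/eqP/forallP.
  move/eq_in_map => H k; rewrite cast_ord_id; apply/eqP; exact: (H k (mem_enum _ _)).
move=> H; apply/eq_in_map => k _; have := H k; rewrite cast_ord_id; exact: eqP.
Qed.

Lemma forall_cast m m' (e : m = m') (P : 'I_m' -> bool) :
  [forall k : 'I_m, P (cast_ord e k)] = [forall k : 'I_m', P k].
Proof. by subst m'; apply: eq_forallb => k; rewrite cast_ord_id. Qed.

Lemma low_cond n1 n2 (f : endo (n1 + n2)) (f1 : endo n1) :
  (ef_code (stdres f (lowset n1 n2)) == ef_code f1) =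
  [forall k : 'I_n1, (if (f (lshift n2 k) < n1)%N then val (f (lshift n2 k))
                      else val k) == val (f1 k)].
Proof.
rewrite (ef_code_eq _ _ (card_low n1 n2)).
set e := card_low n1 n2.
rewrite -(forall_cast e).
apply: eq_forallb => k.
set k1 := cast_ord e k.
rewrite (@stdres_val' _ f _ 0 n1 e (low_enum n1 n2) k (lshift n2 k1)) //.
by rewrite add0n subn0.
Qed.

Lemma high_cond n1 n2 (f : endo (n1 + n2)) (f2 : endo n2) :
  (ef_code (stdres f (highset n1 n2)) == ef_code f2) =
  [forall k : 'I_n2, (if (n1 <= f (rshift n1 k))%N then (f (rshift n1 k) - n1)%N
                      else val k) == val (f2 k)].
Proof.
rewrite (ef_code_eq _ _ (card_high n1 n2)).
set e := card_high n1 n2.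
rewrite -(forall_cast e).
apply: eq_forallb => k.
set k1 := cast_ord e k.
rewrite (@stdres_val' _ f _ n1 n2 e (high_enum n1 n2) k (rshift n1 k1)) //.
by rewrite ltn_ord andbT.
Qed.

Definition Qset n1 n2 (f1 : endo n1) (f2 : endo n2) (j : 'I_(n1 + n2)) : pred 'I_(n1 + n2) :=
  fun y => match split j with
  | inl k => if (y < n1)%N then val y == val (f1 k) else f1 k == k
  | inr k => if (n1 <= y)%N then (y - n1)%N == val (f2 k) else f2 k == k
  end.

Lemma split_l m n (k : 'I_m) : split (lshift n k) = inl k.
Proof. exact: (unsplitK (inl k)). Qed.
Lemma split_r m n (k : 'I_n) : split (rshift m k) = inr k.
Proof. exact: (unsplitK (inr k)). Qed.

Lemma cond_family n1 n2 (f1 : endo n1) (f2 : endo n2) (f : endo (n1 + n2)) :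
  (ef_code (stdres f (lowset n1 n2)) == ef_code f1)
  && (ef_code (stdres f (highset n1 n2)) == ef_code f2)
  = (f \in family (Qset f1 f2)).
Proof.
rewrite low_cond high_cond.
apply/andP/familyP.
  case=> /forallP H1 /forallP H2 j.
  rewrite -(splitK j); case: (split j) => k; rewrite /in_mem /= /Qset ?split_l ?split_r /=.
    have := H1 k; case: ifP => // _ /eqP E.
    by apply/eqP/val_inj; rewrite E.
  have := H2 k; case: ifP => // _ /eqP E.
  by apply/eqP/val_inj; rewrite E.
move=> H; split; apply/forallP => k.
  have := H (unsplit (inl k)); rewrite /in_mem /= /Qset ?split_l ?split_r /=.
  case: ifP => // _ /eqP E.
  by rewrite E.
have := H (unsplit (inr k)); rewrite /in_mem /= /Qset ?split_l ?split_r /=.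
case: ifP => // _ /eqP E.
by rewrite E.
Qed.

Lemma AA_nonfix n w (j y : 'I_n) : y != j -> AA w j y = cc w j y.
Proof.
move=> /negbTE H; rewrite /AA (big_pred1 y); first by rewrite H mul1r.
by move=> z; rewrite H orbF /= eq_sym.
Qed.

Lemma AA_fix n w (j : 'I_n) : AA w j j = \sum_z (-1) ^+ (z != j) * cc w j z.
Proof. by rewrite /AA; apply: eq_big => [z|z _]; rewrite eqxx ?orbT. Qed.

Lemma cc_take n1 n2 w (k z : 'I_n1) :
  cc (take n1 w) k z = cc w (lshift n2 k) (lshift n2 z).
Proof.
by rewrite /cc !nth_take // (inj_eq (@lshift_inj n1 n2)).
Qed.

Lemma cc_drop n1 n2 w (k z : 'I_n2) :
  cc (drop n1 w) k z = cc w (rshift n1 k) (rshift n1 z).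
Proof.
by rewrite /cc !nth_drop (inj_eq (@rshift_inj n1 n2)).
Qed.

Lemma rl_neq n1 n2 (z : 'I_n2) (k : 'I_n1) : (rshift n1 z == lshift n2 k) = false.
Proof.
apply/negbTE; rewrite -val_eqE /= neq_ltn.
by rewrite (ltn_addr _ (ltn_ord k)) orbT.
Qed.

Lemma lr_neq n1 n2 (z : 'I_n2) (k : 'I_n1) : (lshift n2 k == rshift n1 z) = false.
Proof. by rewrite eq_sym rl_neq. Qed.

Lemma low_factor n1 n2 (f1 : endo n1) (f2 : endo n2) w (k : 'I_n1) :
  \sum_(y | Qset f1 f2 (lshift n2 k) y) AA w (lshift n2 k) y = AA (take n1 w) k (f1 k).
Proof.
have Qe : forall y, Qset f1 f2 (lshift n2 k) y =
    (if (y < n1)%N then val y == val (f1 k) else f1 k == k).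
  by move=> y; rewrite /Qset split_l.
case: (eqVneq (f1 k) k) => Hk.
  rewrite Hk in Qe *.
  rewrite (bigD1 (lshift n2 k)) /=; last by rewrite Qe /= ltn_ord eqxx.
  rewrite (eq_bigr (fun y => cc w (lshift n2 k) y)); last first.
    by move=> y /andP [_ Hy]; rewrite AA_nonfix.
  rewrite !AA_fix !big_split_ord /=.
  rewrite (@big_pred0 _ _ _ _ _ (fun i : 'I_n1 => _ && _)); last first.
    move=> i; rewrite Qe /= ltn_ord (inj_eq (@lshift_inj n1 n2)).
    by rewrite andbN.
  have Hs : \sum_(i < n2 | Qset f1 f2 (lshift n2 k) (rshift n1 i) &&
                 (rshift n1 i != lshift n2 k)) cc w (lshift n2 k) (rshift n1 i)
          = \sum_(i < n2) cc w (lshift n2 k) (rshift n1 i).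
    by apply: eq_bigl => i; rewrite Qe /= ltnNge leq_addr /= eqxx rl_neq.
  rewrite Hs.
  under [X in _ + X + _]eq_bigr => i _ do rewrite rl_neq expr1 mulN1r.
  rewrite sumrN add0r subrK.
  by apply: eq_bigr => i _; rewrite (inj_eq (@lshift_inj n1 n2)) (cc_take n2).
rewrite (big_pred1 (lshift n2 (f1 k))); last first.
  move=> y; rewrite Qe (negbTE Hk) /=.
  case: ltnP => Hy.
    by rewrite -val_eqE.
  by apply/esym/eqP => Ey; move: Hy; rewrite Ey /= leqNgt ltn_ord.
rewrite !AA_nonfix ?(cc_take n2) //.
Qed.

Lemma high_factor n1 n2 (f1 : endo n1) (f2 : endo n2) w (k : 'I_n2) :
  \sum_(y | Qset f1 f2 (rshift n1 k) y) AA w (rshift n1 k) y = AA (drop n1 w) k (f2 k).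
Proof.
have Qe : forall y, Qset f1 f2 (rshift n1 k) y =
    (if (n1 <= y)%N then (y - n1)%N == val (f2 k) else f2 k == k).
  by move=> y; rewrite /Qset split_r.
case: (eqVneq (f2 k) k) => Hk.
  rewrite Hk in Qe *.
  rewrite (bigD1 (rshift n1 k)) /=; last by rewrite Qe /= leq_addr addKn eqxx.
  rewrite (eq_bigr (fun y => cc w (rshift n1 k) y)); last first.
    by move=> y /andP [_ Hy]; rewrite AA_nonfix.
  rewrite !AA_fix !big_split_ord /=.
  have Hs : \sum_(i < n1 | Qset f1 f2 (rshift n1 k) (lshift n2 i) &&
                 (lshift n2 i != rshift n1 k)) cc w (rshift n1 k) (lshift n2 i)
          = \sum_(i < n1) cc w (rshift n1 k) (lshift n2 i).
    by apply: eq_bigl => i; rewrite Qe /= leqNgt ltn_ord /= eqxx lr_neq.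
  rewrite Hs.
  rewrite (@big_pred0 _ _ _ _ _ (fun i : 'I_n2 => _ && _)); last first.
    move=> i; rewrite Qe /= leq_addr addKn (inj_eq (@rshift_inj n1 n2)).
    by rewrite andbN.
  under [X in X + _ + _]eq_bigr => i _ do rewrite lr_neq expr1 mulN1r.
  rewrite sumrN addr0 addrAC addNr add0r.
  by apply: eq_bigr => i _; rewrite (inj_eq (@rshift_inj n1 n2)) (cc_drop n1).
rewrite (big_pred1 (rshift n1 (f2 k))); last first.
  move=> y; rewrite Qe (negbTE Hk) /=.
  case: leqP => Hy.
    apply/eqP/eqP => [E | ->]; last by rewrite /= addKn.
    by apply: val_inj; rewrite /= -E subnKC.
  apply/esym/eqP => Ey; move: Hy; rewrite Ey /= ltnNge leq_addr.
  done.
by rewrite !AA_nonfix ?(cc_drop n1) // (inj_eq (@rshift_inj n1 n2)).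
Qed.

Unset Implicit Arguments.
Set Strict Implicit.

Theorem mainTheorem16 (n1 n2 : nat) (f1 : endo n1) (f2 : endo n2) (w : seq letter) :
  ser_mul (Rf f1) (Rf f2) w =
  \sum_(f : endo (n1 + n2) | (ef_code (stdres f (lowset n1 n2)) == ef_code f1)
                          && (ef_code (stdres f (highset n1 n2)) == ef_code f2))
     Rf f w.
Proof.
have -> : \sum_(f : endo (n1 + n2) | (ef_code (stdres f (lowset n1 n2)) == ef_code f1)
                          && (ef_code (stdres f (highset n1 n2)) == ef_code f2))
     Rf f w = (VV (n1 + n2) w : nat)%:Z *
        (\prod_(k < n1) AA (take n1 w) k (f1 k) * \prod_(k < n2) AA (drop n1 w) k (f2 k)).
  rewrite (eq_bigl (fun f => f \in family (Qset f1 f2))); last first.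
    by move=> f; rewrite cond_family.
  under eq_bigr => f _ do rewrite Rf_prod.
  rewrite -mulr_sumr -(@bigA_distr_big_dep _ _ _ _ _ _ _ (Qset f1 f2) (fun i y => AA w i y)).
  rewrite big_split_ord /=.
  congr (_ * (_ * _)); apply: eq_bigr => k _; [exact: low_factor | exact: high_factor].
rewrite /ser_mul.
case: (eqVneq (size w) (n1 + n2)) => Hs.
  have Hn : (n1 < (size w).+1)%N by rewrite Hs ltnS leq_addr.
  rewrite (bigD1 (Ordinal Hn)) //= big1 ?addr0; last first.
    move=> i Hi; rewrite !Rf_prod.
    have Hi' : (val i == n1) = false.
      by apply/negbTE; move: Hi; rewrite -val_eqE.
    have Hle : (i <= size w)%N by rewrite -ltnS.
    by rewrite /VV size_takel // Hi' /= mul0r mul0r.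
  rewrite !Rf_prod mulrACA -PoszM mulnb.
  congr (Posz (nat_of_bool _) * _).
  rewrite /VV size_takel ?Hs ?leq_addr // size_drop Hs addKn !eqxx /=.
  by rewrite -all_cat cat_take_drop.
rewrite /VV (negbTE Hs) /= mul0r big1 // => i _.
rewrite !Rf_prod.
case E1: (VV n1 (take i w)); last by rewrite !mul0r.
case E2: (VV n2 (drop i w)); last by rewrite mul0r mulr0.
move: E1 E2 Hs; rewrite /VV => /andP [/eqP S1 _] /andP [/eqP S2 _] Hs.
have := size_cat (take i w) (drop i w); rewrite cat_take_drop S1 S2 => E.
by rewrite E eqxx in Hs.
Qed.
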